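(* Let $p\in\{1,\infty\}$ and let $\mathcal J \subseteq 2^{[m]}$ be a nonempty family of forbidden supports for $\mathcal P_{0/p}$. Define $J^{none} := [m]\setminus \bigcup_{J\in\mathcal J} J$ and $J^{some} := [m]\setminus\big(J^{none}\cup \bigcap_{J\in\mathcal J} J\big)$. Then the forbidden support family inequality $$\sum_{j\in J^{none}} 2\, b_j + \sum_{j \in J^{some}} b_j \;\ge\; 2$$ is valid for $\mathsf{MIP}_{0/p}$: every feasible solution $(x,w,b)$ of $\mathsf{MIP}_{0/p}$ satisfies it.
   Context: Data: a matrix $H=(h_{ij}) \in \mathbb{R}^{n\times m}$, a vector $y \in \mathbb{R}^n$, thresholds $\alpha_1 \ge 0$ and $\alpha_\infty \ge 0$, and a constant $M>0$. For a positive integer $t$, write $[t]=\{1,\dots,t\}$. For $J\subseteq[m]$, $H^J$ denotes the submatrix of $H$ consisting of the columns indexed by $J$, and $x^J$ the subvector of $x$ indexed by $J$. A set $J \subseteq [m]$ is a forbidden support for $\mathcal P_{0/p}$ if $\min_{x^J} \|y - H^J x^J\|_p > \alpha_p$, i.e. there is no $x \in \mathbb{R}^m$ with $x_j = 0$ for all $j \notin J$ and $\|y - Hx\|_p \le \alpha_p$. $\mathsf{MIP}_{0/1}$ is the set of $(x,w,b) \in \mathbb{R}^m \times \mathbb{R}^n \times \{0,1\}^m$ satisfying $-Mb_j \le x_j \le M b_j$ for all $j\in[m]$, $-w_i \le y_i - \sum_{j\in[m]} h_{ij}x_j \le w_i$ for all $i \in [n]$, and $\sum_{i\in[n]} w_i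 \le \alpha_1$. $\mathsf{MIP}_{0/\infty}$ is the set of $(x,w,b) \in \mathbb{R}^m \times \mathbb{R} \times \{0,1\}^m$ satisfying $-Mb_j \le x_j \le M b_j$ for all $j\in[m]$, $-w \le y_i - \sum_{j\in[m]} h_{ij}x_j \le w$ for all $i \in [n]$, and $w \le \alpha_\infty$. An inequality in the variables $b$ is valid for $\mathsf{MIP}_{0/p}$ if it is satisfied by every feasible point of $\mathsf{MIP}_{0/p}$. *)

(* Defs.v *)
From HB Require Import structures.
From mathcomp Require Import all_boot all_order all_algebra.
Set Implicit Arguments. Unset Strict Implicit. Unset Printing Implicit Defensive.
Import Order.TTheory GRing.Theory Num.Theory.
Local Open Scope ring_scope.

Inductive pchoice := P1 | Pinf.

Section Defs.
Variables (R : realFieldType) (n m : nat).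

Definition resid (H : 'M[R]_(n, m)) (y : 'I_n -> R) (x : 'I_m -> R) (i : 'I_n) : R :=
  y i - \sum_(j < m) H i j * x j.

Definition norm1 (r : 'I_n -> R) : R := \sum_(i < n) `|r i|.
Definition norminf (r : 'I_n -> R) : R := \big[Num.max/0]_(i < n) `|r i|.

Definition pnorm (p : pchoice) (r : 'I_n -> R) : R :=
  match p with P1 => norm1 r | Pinf => norminf r end.

Definition alpha_p (p : pchoice) (alpha1 alphainf : R) : R :=
  match p with P1 => alpha1 | Pinf => alphainf end.

Definition forbidden_support (p : pchoice) (H : 'M[R]_(n, m)) (y : 'I_n -> R)
    (alpha1 alphainf : R) (J : {set 'I_m}) : Prop :=
  ~ exists x : 'I_m -> R,
      (forall j, j \notin J -> x j = 0) /\
      pnorm p (resid H y x) <= alpha_p p alpha1 alphainf.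

Definition MIP01 (H : 'M[R]_(n, m)) (y : 'I_n -> R) (alpha1 M : R)
    (x : 'I_m -> R) (w : 'I_n -> R) (b : 'I_m -> bool) : Prop :=
  (forall j, - (M * (b j)%:R) <= x j /\ x j <= M * (b j)%:R) /\
  (forall i, - w i <= y i - \sum_(j < m) H i j * x j /\
             y i - \sum_(j < m) H i j * x j <= w i) /\
  \sum_(i < n) w i <= alpha1.

Definition MIP0inf (H : 'M[R]_(n, m)) (y : 'I_n -> R) (alphainf M : R)
    (x : 'I_m -> R) (w : R) (b : 'I_m -> bool) : Prop :=
  (forall j, - (M * (b j)%:R) <= x j /\ x j <= M * (b j)%:R) /\
  (forall i, - w <= y i - \sum_(j < m) H i j * x j /\
             y i - \sum_(j < m) H i j * x j <= w) /\
  w <= alphainf.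

Definition valid_for_MIP (p : pchoice) (H : 'M[R]_(n, m)) (y : 'I_n -> R)
    (alpha1 alphainf M : R) (ineq : ('I_m -> bool) -> Prop) : Prop :=
  match p with
  | P1 => forall x w b, MIP01 H y alpha1 M x w b -> ineq b
  | Pinf => forall x w b, MIP0inf H y alphainf M x w b -> ineq b
  end.

Definition Jnone (F : {set {set 'I_m}}) : {set 'I_m} :=
  ~: \bigcup_(J in F) J.

Definition Jsome (F : {set {set 'I_m}}) : {set 'I_m} :=
  ~: (Jnone F :|: \bigcap_(J in F) J).

Definition FSF_ineq (F : {set {set 'I_m}}) (b : 'I_m -> bool) : Prop :=
  \sum_(j in Jnone F) 2 * (b j)%:R + \sum_(j in Jsome F) (b j)%:R >= 2 :> R.

End Defs.

(* Main.v *)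
Require Import Defs.
From Stdlib Require Import Classical.
From mathcomp Require Import all_boot all_order all_algebra.
Import Order.TTheory GRing.Theory Num.Theory.
Local Open Scope ring_scope.

Lemma key (R : realFieldType) (m : nat) (F : {set {set 'I_m}}) (b : 'I_m -> bool)
  (hFne : F != set0)
  (Hcov : forall J, J \in F -> exists j, b j && (j \notin J)) :
  @FSF_ineq R m F b.
Proof.
rewrite /FSF_ineq.
have T0ge : 0 <= \sum_(j in Jnone F) 2 * (b j)%:R :> R.
  by apply: sumr_ge0 => j _; rewrite mulr_ge0.
have T1ge : 0 <= \sum_(j in Jsome F) (b j)%:R :> R.
  by apply: sumr_ge0 => j _.
case: (boolP [exists j, (j \in Jnone F) && b j]).
  case/existsP => j /andP [hj bj].
  rewrite (bigD1 j) //= bj mulr1.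
  have : 0 <= \sum_(i in Jnone F | i != j) 2 * (b i)%:R :> R.
    by apply: sumr_ge0 => i _; rewrite mulr_ge0.
  move=> h; have h2 : 2 <= 2 + \sum_(i in Jnone F | i != j) 2 * (b i)%:R :> R.
    by rewrite lerDl.
  by apply: le_trans h2 _; rewrite lerDl.
rewrite negb_exists => /forallP hno.
have inS : forall j J, J \in F -> b j -> j \notin J -> j \in Jsome F.
  move=> j J JF bj jJ.
  rewrite /Jsome in_setC in_setU negb_or.
  apply/andP; split.
    by move: (hno j); rewrite bj andbT.
  apply/bigcapP => /(_ J JF); by rewrite (negbTE jJ).
have inU : forall j, b j -> exists2 J, J \in F & j \in J.
  move=> j bj; move: (hno j); rewrite bj andbT /Jnone in_setC negbK.
  by move/bigcupP => [J JF jJ]; exists J.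
case/set0Pn: hFne => J0 J0F.
case: (Hcov J0 J0F) => j1 /andP [b1 n1].
case: (inU j1 b1) => J1 J1F j1J1.
case: (Hcov J1 J1F) => j2 /andP [b2 n2].
have ne : j2 != j1 by apply/eqP => e; move: n2; rewrite e j1J1.
have s1 := inS _ _ J0F b1 n1.
have s2 := inS _ _ J1F b2 n2.
apply: (@le_trans _ _ (\sum_(j in Jsome F) (b j)%:R)); last by rewrite lerDr.
rewrite (bigD1 j1) //= (bigD1 j2) /=; last by rewrite s2 ne.
rewrite b1 b2 addrA.
rewrite -[X in X <= _]addr0; apply: lerD; last by apply: sumr_ge0.
by rewrite -natrD.
Qed.

Theorem proposition3 (R : realFieldType) (n m : nat) (H : 'M[R]_(n, m))
    (y : 'I_n -> R) (alpha1 alphainf M : R)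
    (halpha1 : 0 <= alpha1) (halphainf : 0 <= alphainf) (hM : 0 < M)
    (p : pchoice) (F : {set {set 'I_m}})
    (hFne : F != set0)
    (hF : forall J, J \in F -> forbidden_support p H y alpha1 alphainf J) :
  valid_for_MIP p H y alpha1 alphainf M (@FSF_ineq R m F).
Proof.
case: p hF => hF x w b [Hb [Hr Ha]]; apply: key => // J JF;
  (apply: NNPP => hne; apply: (hF J JF); exists x; split;
  [ move=> j jJ; have bj : b j = false;
      [ apply: negbTE; apply/negP => bj; apply: hne; exists j; by rewrite bj jJ
      | by move: (Hb j); rewrite bj mulr0 oppr0 => [[h1 h2]]; apply/eqP; rewrite eq_le h1 h2 ]
  | ]).
- rewrite /= /norm1; apply: le_trans Ha; apply: ler_sum => i _.
  by rewrite /resid ler_norml; case: (Hr i) => h1 h2; apply/andP.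
- rewrite /= /norminf.
  apply: (@le_trans _ _ (Num.max w 0)); last by rewrite ge_max Ha halphainf.
  elim/big_ind: _ => //.
  + by rewrite le_max lexx orbT.
  + by move=> a c ha hc; rewrite ge_max ha hc.
  + move=> i _; rewrite le_max; apply/orP; left.
    by rewrite /resid ler_norml; case: (Hr i) => h1 h2; apply/andP.
Qed.
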